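(* Under the setting below, assume $G$ is convex, the sampling is essentially cyclic with period $T\ge1$ (every $i\in[N]$ belongs to at least one of $I^{k+1},\dots,I^{k+T}$ for every $k\ge0$), and each $f_i$ is $\mu_{f_i}$-strongly convex ($\mu_{f_i}>0$). Let $\delta:=\min_{i}\frac{\gamma_i\mu_{f_i}}{N}$, $\Delta:=\max_i\frac{\gamma_iL_{f_i}}{N}$, $\bm x^\star$ the unique minimizer of $\Phi$, $\mu_F:=\frac1N\operatorname{blockdiag}(\mu_{f_1}I_{n_1},\dots,\mu_{f_N}I_{n_N})$ and $c:=\frac{\delta(1-\Delta)}{N(1+T(1-\delta))^2(1-\delta)}$. Then for all $\nu\in\mathbb N$: $\Phi^{\mathrm{FB}}_\Gamma(\bm x^{T(\nu+1)})-\min\Phi\le(1-c)(\Phi^{\mathrm{FB}}_\Gamma(\bm x^{T\nu})-\min\Phi)$, $\Phi(\bm z^{T\nu})-\min\Phi\le(\Phi(\bm x^0)-\min\Phi)(1-c)^\nu$, $\frac12\|\bm z^{T\nu}-\bm x^\star\|^2_{\mu_F}\le(\Phi(\bm x^0)-\min\Phi)(1-c)^\nu$. If the sampling is shuffled cyclic, i.e. $I^{k+1}=\{\pi_{\lfloor k/N\rfloor}(\mathrm{mod}(k,N)+1)\}$ for permutations $\pi_0,\pi_1,\dots$ of $[N]$ (which includes the cyclic rule $I^{k+1}=\{\mathrm{mod}(k,N)+1\}$), then the same three inequalities hold with $T$ replaced by $N$ and with $c:=\frac{\delta(1-\Delta)}{N(2-\delta)^2(1-\delta)}$.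
   Context: Setting: $N\ge1$, $n=\sum_{i=1}^N n_i$, $\bm x=(x_1,\dots,x_N)$ with $x_i\in\mathbb R^{n_i}$; $\Phi=F+G$ with $F(\bm x)=\frac1N\sum_i f_i(x_i)$, each $f_i:\mathbb R^{n_i}\to\mathbb R$ differentiable with $L_{f_i}$-Lipschitz gradient, $G:\mathbb R^n\to\mathbb R\cup\{+\infty\}$ proper lsc, $\arg\min\Phi\ne\emptyset$. $\gamma_i\in(0,N/L_{f_i})$, $\Gamma=\operatorname{blockdiag}(\gamma_1I_{n_1},\dots,\gamma_NI_{n_N})$, $\|x\|_V^2=\langle x,Vx\rangle$, $\operatorname{prox}_G^{V}(u)=\arg\min_w\{G(w)+\frac12\|w-u\|_V^2\}$, $\mathbf T(\bm x)=\operatorname{prox}_G^{\Gamma^{-1}}(\bm x-\Gamma\nabla F(\bm x))$. Forward-backward envelope: $\Phi^{\mathrm{FB}}_\Gamma(\bm x):=\inf_{\bm w}\{F(\bm x)+\langle\nabla F(\bm x),\bm w-\bm x\rangle+G(\bm w)+\frac12\|\bm w-\bm x\|^2_{\Gamma^{-1}}\}$. Algorithm BC: given $\bm x^0\in\mathbb R^n$, for $k=0,1,\dots$: pick $\bm z^k\in\mathbf T(\bm x^k)$; select $I^{k+1}\subseteq[N]$; set $x_i^{k+1}=z_i^k$ for $i\in I^{k+1}$ and $x_i^{k+1}=x_i^k$ otherwise. *)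

(* Defs.v *)
From Stdlib Require Import Reals ClassicalEpsilon.
Open Scope R_scope.

Inductive ER : Type := ninf | fin (r : R) | pinf.

Definition ER_le (a b : ER) : Prop :=
  match a, b with
  | ninf, _ => True
  | _, pinf => True
  | fin x, fin y => x <= y
  | _, _ => False
  end.

Definition ER_lt (a b : ER) : Prop := ER_le a b /\ a <> b.

Definition ER_addr (r : R) (e : ER) : ER :=
  match e with ninf => ninf | fin y => fin (r + y) | pinf => pinf end.

Definition is_glb (S : ER -> Prop) (y : ER) : Prop :=
  (forall v, S v -> ER_le y v) /\
  (forall y', (forall v, S v -> ER_le y' v) -> ER_le y' y).

(* infimum of a set of extended reals (always exists in the complete lattice) *)
Definition ER_inf (S : ER -> Prop) : ER := epsilon (inhabits ninf) (is_glb S).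

Fixpoint fsum (m : nat) (g : nat -> R) : R :=
  match m with O => 0 | S m' => fsum m' g + g m' end.

(* bmin m g = min (g 0, ..., g m), bmax likewise *)
Fixpoint bmin (m : nat) (g : nat -> R) : R :=
  match m with O => g O | S m' => Rmin (bmin m' g) (g m) end.
Fixpoint bmax (m : nat) (g : nat -> R) : R :=
  match m with O => g O | S m' => Rmax (bmax m' g) (g m) end.

(* ---------- the block space R^{n_1} x ... x R^{n_N} ----------
   A vector of R^m is represented by u : nat -> R (only coordinates j < m matter);
   a block vector x = (x_1,...,x_N) by x : nat -> nat -> R, x i j being
   coordinate j of block i (only i < N, j < n i matter).  Blocks and coordinates
   are 0-indexed. *)
Definition vec := nat -> R.
Definition bvec := nat -> nat -> R.

Definition ip (m : nat) (u v : vec) : R := fsum m (fun j => u j * v j).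
Definition nrm (m : nat) (u : vec) : R := sqrt (ip m u u).
Definition vsub (u v : vec) : vec := fun j => u j - v j.
Definition vcomb (t : R) (u v : vec) : vec := fun j => t * u j + (1 - t) * v j.

Definition bsub (x y : bvec) : bvec := fun i j => x i j - y i j.
Definition bcomb (t : R) (x y : bvec) : bvec := fun i j => t * x i j + (1 - t) * y i j.
(* weighted squared norm  sum_i w_i ||x_i||^2  (norm induced by blockdiag(w_i I)) *)
Definition wbnsq (N : nat) (n : nat -> nat) (w : nat -> R) (x : bvec) : R :=
  fsum N (fun i => w i * ip (n i) (x i) (x i)).
Definition bnrm (N : nat) (n : nat -> nat) (x : bvec) : R :=
  sqrt (wbnsq N n (fun _ => 1) x).
Definition bip (N : nat) (n : nat -> nat) (x y : bvec) : R :=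
  fsum N (fun i => ip (n i) (x i) (y i)).

Definition fun_on (m : nat) (h : vec -> R) : Prop :=
  forall u v, (forall j, (j < m)%nat -> u j = v j) -> h u = h v.
Definition bfun_on (N : nat) (n : nat -> nat) (H : bvec -> ER) : Prop :=
  forall x y, (forall i j, (i < N)%nat -> (j < n i)%nat -> x i j = y i j) -> H x = H y.

Definition has_gradient (m : nat) (h : vec -> R) (g : vec -> vec) : Prop :=
  forall u eps, 0 < eps -> exists del, 0 < del /\
    forall v, nrm m (vsub v u) < del ->
      Rabs (h v - h u - ip m (g u) (vsub v u)) <= eps * nrm m (vsub v u).

Definition lipschitz_grad (m : nat) (g : vec -> vec) (L : R) : Prop :=
  forall u v, nrm m (vsub (g u) (g v)) <= L * nrm m (vsub u v).

Definition strongly_convex (m : nat) (h : vec -> R) (mu : R) : Prop :=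
  forall u v t, 0 <= t <= 1 ->
    h (vcomb t u v) <= t * h u + (1 - t) * h v
                       - mu / 2 * t * (1 - t) * (nrm m (vsub u v)) ^ 2.

Definition proper (G : bvec -> ER) : Prop :=
  (forall x, G x <> ninf) /\ exists x, G x <> pinf.

Definition lsc (N : nat) (n : nat -> nat) (G : bvec -> ER) : Prop :=
  forall x a, ER_lt (fin a) (G x) -> exists del, 0 < del /\
    forall y, bnrm N n (bsub y x) < del -> ER_lt (fin a) (G y).

Definition convexG (G : bvec -> ER) : Prop :=
  forall x y a b t, G x = fin a -> G y = fin b -> 0 < t < 1 ->
    ER_le (G (bcomb t x y)) (fin (t * a + (1 - t) * b)).

Section Problem.
Variables (N : nat) (n : nat -> nat) (f : nat -> vec -> R) (grad : nat -> vec -> vec)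
          (G : bvec -> ER) (gamma : nat -> R).

Definition Fsm (x : bvec) : R := / INR N * fsum N (fun i => f i (x i)).
Definition gradF (x : bvec) : bvec := fun i j => / INR N * grad i (x i) j.
Definition Phi (x : bvec) : ER := ER_addr (Fsm x) (G x).

Definition is_minimizer (xs : bvec) : Prop := forall y, ER_le (Phi xs) (Phi y).

(* z ∈ T(x) = prox_G^{Γ^{-1}} (x - Γ ∇F(x)) *)
Definition prox_obj (u w : bvec) : ER :=
  ER_addr (1 / 2 * wbnsq N n (fun i => / gamma i) (bsub w u)) (G w).
Definition fb_step (x : bvec) : bvec := fun i j => x i j - gamma i * gradF x i j.
Definition in_T (x z : bvec) : Prop :=
  forall w, ER_le (prox_obj (fb_step x) z) (prox_obj (fb_step x) w).

Definition FBE (x : bvec) : ER :=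
  ER_inf (fun v => exists w, v =
    ER_addr (Fsm x + bip N n (gradF x) (bsub w x)
             + 1 / 2 * wbnsq N n (fun i => / gamma i) (bsub w x)) (G w)).

(* Algorithm BC: z^k ∈ T(x^k); x^{k+1}_i = z^k_i if i ∈ I^{k+1}, else x^k_i.
   I k i  means  i ∈ I^k. *)
Definition algorithm_BC (I : nat -> nat -> bool) (x z : nat -> bvec) : Prop :=
  (forall k i, I (S k) i = true -> (i < N)%nat) /\
  (forall k, in_T (x k) (z k)) /\
  (forall k i, x (S k) i = if I (S k) i then z k i else x k i).

Definition essentially_cyclic (I : nat -> nat -> bool) (T : nat) : Prop :=
  forall k i, (i < N)%nat -> exists t, (1 <= t <= T)%nat /\ I (k + t)%nat i = true.

Definition perm_of_N (p : nat -> nat) : Prop :=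
  (forall j, (j < N)%nat -> (p j < N)%nat) /\
  (forall j1 j2, (j1 < N)%nat -> (j2 < N)%nat -> p j1 = p j2 -> j1 = j2).

(* shuffled cyclic sampling: I^{k+1} = { pi_{floor(k/N)} (k mod N) } (0-indexed) *)
Definition shuffled_cyclic (I : nat -> nat -> bool) : Prop :=
  exists pi : nat -> nat -> nat, (forall p, perm_of_N (pi p)) /\
    forall k i, I (S k) i = true <-> i = pi (Nat.div k N) (Nat.modulo k N).

Definition linear_rates (mu : nat -> R) (x z : nat -> bvec) (P : nat) (c : R) : Prop :=
  forall xs m, is_minimizer xs -> Phi xs = fin m -> forall nu : nat,
    (forall b, FBE (x (P * nu)%nat) = fin b ->
       ER_le (FBE (x (P * (nu + 1))%nat)) (fin (m + (1 - c) * (b - m)))) /\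
    (forall a, Phi (x O) = fin a ->
       ER_le (Phi (z (P * nu)%nat)) (fin (m + (a - m) * (1 - c) ^ nu)) /\
       1 / 2 * wbnsq N n (fun i => mu i / INR N) (bsub (z (P * nu)%nat) xs)
         <= (a - m) * (1 - c) ^ nu).

End Problem.

(* Main.v *)
Require Import Defs.
From Stdlib Require Import Reals Lra Lia Psatz ClassicalEpsilon FinFun Classical Wf_nat.
Open Scope R_scope.

Lemma fsum_ext m f g : (forall j, (j < m)%nat -> f j = g j) -> fsum m f = fsum m g.
Proof. induction m; simpl; intros H; [reflexivity|]. rewrite IHm by (intros; apply H; lia). rewrite (H m) by lia; reflexivity. Qed.

Lemma fsum_le m f g : (forall j, (j < m)%nat -> f j <= g j) -> fsum m f <= fsum m g.
Proof. induction m; simpl; intros H; [lra|]. pose proof (IHm (fun j Hj => H j ltac:(lia))). pose proof (H m ltac:(lia)). lra. Qed.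

Lemma fsum_plus m f g : fsum m (fun j => f j + g j) = fsum m f + fsum m g.
Proof. induction m; simpl; [ring|]. rewrite IHm; ring. Qed.

Lemma fsum_minus m f g : fsum m (fun j => f j - g j) = fsum m f - fsum m g.
Proof. induction m; simpl; [ring|]. rewrite IHm; ring. Qed.

Lemma fsum_scal m c f : fsum m (fun j => c * f j) = c * fsum m f.
Proof. induction m; simpl; [ring|]. rewrite IHm; ring. Qed.

Lemma fsum_zero m : fsum m (fun _ => 0) = 0.
Proof. induction m; simpl; [ring|]. rewrite IHm; ring. Qed.

Lemma fsum_nonneg m f : (forall j, (j < m)%nat -> 0 <= f j) -> 0 <= fsum m f.
Proof. intros H. rewrite <- (fsum_zero m). apply fsum_le; auto. Qed.

Lemma fsum_term_le m f i : (forall j, (j < m)%nat -> 0 <= f j) -> (i < m)%nat -> f i <= fsum m f.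
Proof.
  induction m; simpl; intros H Hi; [lia|].
  assert (0 <= fsum m f) by (apply fsum_nonneg; intros; apply H; lia).
  destruct (Nat.eq_dec i m) as [->|Hne].
  - lra.
  - pose proof (IHm (fun j Hj => H j ltac:(lia)) ltac:(lia)). pose proof (H m ltac:(lia)). lra.
Qed.

Lemma fsum_m0 f : fsum 0 f = 0.
Proof. reflexivity. Qed.

Lemma ip_nonneg m u : 0 <= ip m u u.
Proof. unfold ip. apply fsum_nonneg. intros. nra. Qed.

Lemma ip_ext m u u' v v' : (forall j, (j < m)%nat -> u j = u' j) -> (forall j, (j < m)%nat -> v j = v' j) -> ip m u v = ip m u' v'.
Proof. intros. unfold ip. apply fsum_ext. intros. rewrite H, H0 by auto. reflexivity. Qed.

Lemma ip_m0 u v : ip 0 u v = 0.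
Proof. reflexivity. Qed.

Lemma ip_sq_nonneg m a b s : 0 <= ip m a a + 2 * s * ip m a b + s * s * ip m b b.
Proof.
  assert (H : ip m (fun j => a j + s * b j) (fun j => a j + s * b j) = ip m a a + 2 * s * ip m a b + s * s * ip m b b).
  { unfold ip. rewrite <- !fsum_scal, <- !fsum_plus. apply fsum_ext; intros; ring. }
  rewrite <- H. apply ip_nonneg.
Qed.
From Stdlib Require Import FunctionalExtensionality.
Lemma Rabs_le_between x e : Rabs x <= e -> -e <= x <= e.
Proof. intros H. pose proof (Rle_abs x). pose proof (Rle_abs (-x)). rewrite Rabs_Ropp in *. lra. Qed.

Lemma le_of_small a b c t0 : 0 < t0 -> (forall t, 0 < t < t0 -> a <= b + t * c) -> a <= b.
Proof.
  intros Ht0 H. destruct (Rle_or_lt a b) as [|Hab]; [assumption|].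
  destruct (Rle_or_lt c 0) as [Hc|Hc].
  - specialize (H (t0/2) ltac:(lra)). nra.
  - set (t := Rmin (t0/2) ((a-b)/(2*c))).
    assert (Ht1 : t <= t0/2) by apply Rmin_l.
    assert (Ht2 : t <= (a-b)/(2*c)) by apply Rmin_r.
    assert (Htp : 0 < t). { unfold t. apply Rmin_glb_lt; [lra|]. apply Rdiv_lt_0_compat; lra. }
    specialize (H t ltac:(lra)).
    assert (t * c <= (a-b)/2). { apply Rmult_le_compat_r with (r:=c) in Ht2; [|lra].
      replace ((a-b)/(2*c)*c) with ((a-b)/2) in Ht2 by (field; lra). lra. }
    lra.
Qed.

Lemma ip_comm m u v : ip m u v = ip m v u.
Proof. unfold ip. apply fsum_ext; intros; ring. Qed.

Lemma ip_cs_sq m a b : (ip m a b)^2 <= ip m a a * ip m b b.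
Proof.
  pose proof (ip_nonneg m a) as HA. pose proof (ip_nonneg m b) as HC.
  set (A := ip m a a) in *. set (B := ip m a b). set (C := ip m b b) in *.
  destruct (Req_dec C 0) as [HC0|HC0].
  - destruct (Req_dec B 0) as [HB0|HB0].
    + rewrite HB0, HC0. nra.
    + pose proof (ip_sq_nonneg m a b (-(A+1)/(2*B))) as H. fold A B C in H.
      rewrite HC0 in H. replace (2 * (- (A + 1) / (2 * B)) * B) with (-(A+1)) in H by (field; auto). lra.
  - pose proof (ip_sq_nonneg m a b (-(B/C))) as H. fold A B C in H.
    assert (Ct : C * (B/C) = B) by (field; auto).
    assert (HCp : 0 < C) by lra.
    replace (- (B / C) * - (B / C) * C) with ((B/C)*B) in H by (field; auto).
    assert (0 <= A - (B/C) * B) by lra.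
    assert (0 <= C * (A - (B/C)*B)) by nra.
    replace (C * (A - B/C*B)) with (A*C - B*B) in H1 by (field; auto). nra.
Qed.

Lemma ip_cs m a b : ip m a b <= nrm m a * nrm m b.
Proof.
  unfold nrm. rewrite <- sqrt_mult by apply ip_nonneg.
  destruct (Rle_or_lt (ip m a b) 0). { pose proof (sqrt_pos (ip m a a * ip m b b)). lra. }
  rewrite <- (sqrt_pow2 (ip m a b)) by lra. apply sqrt_le_1_alt. apply ip_cs_sq.
Qed.

Lemma nrm_sq m a : nrm m a * nrm m a = ip m a a.
Proof. unfold nrm. apply sqrt_sqrt. apply ip_nonneg. Qed.

Lemma nrm_nonneg m a : 0 <= nrm m a.
Proof. apply sqrt_pos. Qed.

Lemma nrm_scal m t d : 0 <= t -> nrm m (fun j => t * d j) = t * nrm m d.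
Proof.
  intros Ht. unfold nrm.
  replace (ip m (fun j => t * d j) (fun j => t * d j)) with ((t*t) * ip m d d).
  - rewrite sqrt_mult by (try apply ip_nonneg; nra). rewrite sqrt_square by lra. reflexivity.
  - unfold ip. rewrite <- fsum_scal. apply fsum_ext; intros; ring.
Qed.

Lemma nrm_scal_abs m t d : nrm m (fun j => t * d j) = Rabs t * nrm m d.
Proof.
  unfold nrm.
  replace (ip m (fun j => t * d j) (fun j => t * d j)) with ((Rabs t*Rabs t) * ip m d d).
  - rewrite sqrt_mult by (try apply ip_nonneg; pose proof (Rabs_pos t); nra). rewrite sqrt_square by apply Rabs_pos. reflexivity.
  - unfold ip. rewrite <- fsum_scal. apply fsum_ext; intros. rewrite <- Rabs_mult, Rabs_right by (apply Rle_ge; nra). ring.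
Qed.

Lemma ip_scal_r m u t d : ip m u (fun j => t * d j) = t * ip m u d.
Proof. unfold ip. rewrite <- fsum_scal. apply fsum_ext; intros; ring. Qed.

Lemma sc_lower m f g mu u w :
  strongly_convex m f mu -> has_gradient m f g ->
  f u + ip m (g u) (vsub w u) + mu / 2 * ip m (vsub w u) (vsub w u) <= f w.
Proof.
  intros Hsc Hg. set (d := vsub w u). set (D := nrm m d).
  assert (HD : 0 <= D) by apply nrm_nonneg.
  assert (HDD : D * D = ip m d d) by apply nrm_sq.
  cut (forall eps, 0 < eps -> f u + ip m (g u) d + mu/2 * ip m d d <= f w + eps * (D + 1)).
  { intros Hc. apply (le_of_small _ _ (D+1) 1); [lra|]. intros t Ht. apply Hc. lra. }
  intros eps Heps. destruct (Hg u eps Heps) as [del [Hdel Hv]].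
  apply (le_of_small _ _ (mu/2 * ip m d d) (Rmin 1 (del/(D+1)))).
  { apply Rmin_glb_lt; [lra|]. apply Rdiv_lt_0_compat; lra. }
  intros t Ht.
  assert (Ht1 : t < 1) by (pose proof (Rmin_l 1 (del/(D+1))); lra).
  assert (Ht2 : t < del/(D+1)) by (pose proof (Rmin_r 1 (del/(D+1))); lra).
  set (v := vcomb t w u).
  assert (Hvs : vsub v u = fun j => t * d j).
  { unfold v, vcomb, vsub, d. extensionality j. unfold vsub. ring. }
  assert (Hnv : nrm m (vsub v u) = t * D) by (rewrite Hvs; apply nrm_scal; lra).
  assert (HtD : t * D < del).
  { apply Rmult_lt_compat_r with (r:=D+1) in Ht2; [|lra]. replace (del/(D+1)*(D+1)) with del in Ht2 by (field; lra). nra. }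
  specialize (Hv v ltac:(lra)). rewrite Hnv in Hv. rewrite Hvs, ip_scal_r in Hv.
  pose proof (Hsc w u t ltac:(lra)) as Hs. fold v in Hs. fold d in Hs. fold D in Hs.
  apply Rabs_le_between in Hv. destruct Hv as [Hv1 Hv2].
  assert (Hk : t * (ip m (g u) d - eps * D) <= t * (f w - f u - mu/2*(1-t)*(D*D))).
  { replace (D^2) with (D*D) in Hs by ring. nra. }
  apply Rmult_le_reg_l in Hk; [|lra]. rewrite <- HDD. nra.
Qed.

Lemma deriv_line m f g u d s : has_gradient m f g ->
  derivable_pt_lim (fun s => f (fun j => u j + s * d j)) s (ip m (g (fun j => u j + s * d j)) d).
Proof.
  intros Hg eps Heps. set (p := fun j => u j + s * d j). set (D := nrm m d).
  assert (HD : 0 <= D) by apply nrm_nonneg.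
  destruct (Hg p (eps/(2*(D+1))) ltac:(apply Rdiv_lt_0_compat; lra)) as [del [Hdel Hv]].
  assert (Hdp : 0 < del/(D+1)) by (apply Rdiv_lt_0_compat; lra).
  exists (mkposreal _ Hdp). simpl. intros h Hh0 Hh.
  set (v := fun j => u j + (s + h) * d j).
  assert (Hvs : vsub v p = fun j => h * d j) by (unfold v, p, vsub; extensionality j; ring).
  assert (Hnv : nrm m (vsub v p) = Rabs h * D) by (rewrite Hvs; apply nrm_scal_abs).
  assert (Hah : 0 < Rabs h) by (apply Rabs_pos_lt; auto).
  assert (Hlt : Rabs h * D < del).
  { apply Rmult_lt_compat_r with (r:=D+1) in Hh; [|lra]. replace (del/(D+1)*(D+1)) with del in Hh by (field; lra). nra. }
  specialize (Hv v ltac:(lra)). rewrite Hnv, Hvs, ip_scal_r in Hv.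
  change (f v) with (f v) in Hv.
  replace ((f v - f p) / h - ip m (g p) d) with ((f v - f p - h * ip m (g p) d) / h) by (field; auto).
  unfold Rdiv. rewrite Rabs_mult, Rabs_inv.
  apply Rle_lt_trans with (eps / (2 * (D + 1)) * (Rabs h * D) * / Rabs h).
  { apply Rmult_le_compat_r; [left; apply Rinv_0_lt_compat; auto| exact Hv]. }
  replace (eps / (2 * (D + 1)) * (Rabs h * D) * / Rabs h) with (eps * (D / (2*(D+1)))) by (field; lra).
  assert (D / (2*(D+1)) < 1). { apply Rmult_lt_reg_r with (r := 2*(D+1)); [lra|]. replace (D/(2*(D+1))*(2*(D+1))) with D by (field; lra). lra. }
  nra.
Qed.

Lemma descent m f g L u w : lipschitz_grad m g L -> has_gradient m f g ->
  f w <= f u + ip m (g u) (vsub w u) + L / 2 * ip m (vsub w u) (vsub w u).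
Proof.
  intros HL Hg. set (d := vsub w u). set (D := nrm m d).
  assert (HD : 0 <= D) by apply nrm_nonneg.
  assert (HDD : D * D = ip m d d) by apply nrm_sq.
  set (psi := fun s => f (fun j => u j + s * d j) - s * ip m (g u) d - L / 2 * (s * s) * ip m d d).
  set (psi' := fun s => ip m (g (fun j => u j + s * d j)) d - ip m (g u) d - L * s * ip m d d).
  assert (Hd : forall c, 0 <= c <= 1 -> derivable_pt_lim psi c (psi' c)).
  { intros c _. unfold psi, psi'.
    pose proof (deriv_line m f g u d c Hg) as H1.
    pose proof (derivable_pt_lim_scal id (ip m (g u) d) c 1 (derivable_pt_lim_id c)) as H2.
    pose proof (derivable_pt_lim_scal Rsqr (L/2 * ip m d d) c (2 * c) (derivable_pt_lim_Rsqr c)) as H3.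
    pose proof (derivable_pt_lim_minus _ _ _ _ _ (derivable_pt_lim_minus _ _ _ _ _ H1 H2) H3) as H4.
    replace (fun s => f (fun j => u j + s * d j) - s * ip m (g u) d - L / 2 * (s * s) * ip m d d)
      with ((fun s => f (fun j => (u j + s * d j)%R)) - mult_real_fct (ip m (g u) d) id - mult_real_fct (L / 2 * ip m d d) Rsqr)%F
      by (extensionality x; unfold minus_fct, mult_real_fct, id, Rsqr; ring).
    replace (ip m (g (fun j => u j + c * d j)) d - ip m (g u) d - L * c * ip m d d)
      with (ip m (g (fun j => u j + c * d j)) d - ip m (g u) d * 1 - L / 2 * ip m d d * (2 * c)); [exact H4|].
    field. }
  destruct (MVT_cor2 psi psi' 0 1 ltac:(lra) Hd) as [c [Hc Hc01]].
  assert (Hpsi' : psi' c <= 0).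
  { unfold psi'.
    set (q := fun j => u j + c * d j).
    assert (Hsub : vsub (g q) (g u) = vsub (g q) (g u)) by reflexivity.
    pose proof (ip_cs m (vsub (g q) (g u)) d) as Hcs.
    assert (Hip : ip m (vsub (g q) (g u)) d = ip m (g q) d - ip m (g u) d).
    { unfold ip, vsub. rewrite <- fsum_minus. apply fsum_ext; intros; ring. }
    pose proof (HL q u) as Hl.
    assert (Hqs : vsub q u = fun j => c * d j) by (unfold q, vsub; extensionality j; ring).
    rewrite Hqs, nrm_scal in Hl by lra. fold D in Hl.
    pose proof (nrm_nonneg m (vsub (g q) (g u))).
    rewrite <- HDD. fold q. rewrite Hip in Hcs. fold D in Hcs.
    assert (nrm m (vsub (g q) (g u)) * D <= L * (c * D) * D) by (apply Rmult_le_compat_r; auto).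
    nra. }
  unfold psi in Hc.
  replace (fun j => u j + 1 * d j) with w in Hc by (unfold d, vsub; extensionality j; ring).
  replace (fun j => u j + 0 * d j) with u in Hc by (extensionality j; ring).
  fold d. nra.
Qed.

Lemma fsum_opp m f : fsum m (fun j => - f j) = - fsum m f.
Proof. induction m; simpl; [ring|]. rewrite IHm; ring. Qed.

Ltac fsum_merge := repeat (rewrite <- ?fsum_scal, <- ?fsum_plus, <- ?fsum_minus, <- ?fsum_opp).

Definition ERv (e : ER) : R := match e with fin r => r | _ => 0 end.

Lemma ER_le_antisym a b : ER_le a b -> ER_le b a -> a = b.
Proof. destruct a, b; simpl; intros; try tauto; f_equal; lra. Qed.

Lemma ER_le_refl a : ER_le a a.
Proof. destruct a; simpl; auto; lra. Qed.

Lemma ER_le_trans a b c : ER_le a b -> ER_le b c -> ER_le a c.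
Proof. destruct a, b, c; simpl; intros; try tauto; lra. Qed.

Lemma ER_inf_min (S : ER -> Prop) v : S v -> (forall u, S u -> ER_le v u) -> ER_inf S = v.
Proof.
  intros Hv Hmin. unfold ER_inf.
  assert (Hg : is_glb S v) by (split; auto; intros y' Hy'; apply Hy'; auto).
  pose proof (epsilon_spec (inhabits ninf) (is_glb S) (ex_intro _ v Hg)) as He.
  set (e := epsilon _ _) in *. destruct He as [He1 He2]. destruct Hg as [Hg1 Hg2].
  apply ER_le_antisym; [exact (He1 v Hv)| exact (He2 v Hmin)].
Qed.

Lemma ER_addr_fin_le r e s : ER_le (ER_addr r e) (fin s) -> e <> ninf -> exists v, e = fin v /\ r + v <= s.
Proof. destruct e; simpl; intros; try tauto; try congruence. exists r0; auto. Qed.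

Lemma pw_err gm mu' k a zz s g : 0 < gm -> 0 < mu' -> 1 <= k * gm * mu' ->
  g * (zz - a) + 1 / 2 * (/ gm * ((zz - a) * (zz - a))) + / gm * ((zz - (a - gm * g)) * (s - zz))
  - g * (s - a) - 1 / 2 * (mu' * ((s - a) * (s - a)))
  <= (k - 1) / 2 * (/ gm * ((a - zz) * (a - zz))).
Proof.
  intros Hg Hm Hk.
  assert (Hk0 : 0 < k). { destruct (Rle_or_lt k 0); [|auto]. assert (k * gm * mu' <= 0). { assert (0 <= gm*mu') by nra. nra. } lra. }
  set (r := a - zz). set (e := s - a).
  assert (Hid : 2 * gm * k * ((k - 1) / 2 * (/ gm * ((a - zz) * (a - zz))) -
     (g * (zz - a) + 1 / 2 * (/ gm * ((zz - a) * (zz - a))) + / gm * ((zz - (a - gm * g)) * (s - zz))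
      - g * (s - a) - 1 / 2 * (mu' * ((s - a) * (s - a)))))
     = (k * r + e) * (k * r + e) + (k * gm * mu' - 1) * (e * e)).
  { unfold r, e. field; lra. }
  assert (0 <= (k * gm * mu' - 1) * (e * e)) by (apply Rmult_le_pos; [lra| pose proof (Rle_0_sqr e); unfold Rsqr in *; lra]).
  assert (0 <= (k * r + e) * (k * r + e)) by (pose proof (Rle_0_sqr (k*r+e)); unfold Rsqr in *; lra).
  assert (0 <= (k * r + e) * (k * r + e) + (k * gm * mu' - 1) * (e * e)) by lra.
  assert (0 < 2 * gm * k) by nra.
  set (X := (k - 1) / 2 * (/ gm * ((a - zz) * (a - zz))) -
     (g * (zz - a) + 1 / 2 * (/ gm * ((zz - a) * (zz - a))) + / gm * ((zz - (a - gm * g)) * (s - zz))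
      - g * (s - a) - 1 / 2 * (mu' * ((s - a) * (s - a))))) in Hid.
  assert (HX : 0 <= X). { apply (Rmult_le_reg_l (2*gm*k)); [lra|]. rewrite Rmult_0_r, Hid. lra. }
  unfold X, r, e in *. lra.
Qed.

Lemma fwd_contr m f g mu L al u v :
  strongly_convex m f mu -> has_gradient m f g -> lipschitz_grad m g L ->
  0 < al -> al * L < 1 -> 0 <= mu -> mu <= L ->
  ip m (fun j => (u j - al * g u j) - (v j - al * g v j)) (fun j => (u j - al * g u j) - (v j - al * g v j))
  <= (1 - al * mu) ^ 2 * ip m (vsub u v) (vsub u v).
Proof.
  intros Hsc Hg HLg Hal HaL Hmu HmL.
  assert (Ham : al * mu <= al * L) by nra.
  set (t := al / (2 * (1 - al * mu))).
  assert (Ht : 0 < t) by (unfold t; apply Rdiv_lt_0_compat; lra).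
  set (Dh := fun j => (g u j - mu * u j) - (g v j - mu * v j)).
  set (y := fun j => v j + t * Dh j).
  set (y' := fun j => u j - t * Dh j).
  pose proof (sc_lower m f g mu u y Hsc Hg) as E1.
  pose proof (descent m f g L v y HLg Hg) as E2.
  pose proof (sc_lower m f g mu v y' Hsc Hg) as E3.
  pose proof (descent m f g L u y' HLg Hg) as E4.
  set (S := ip m (g u) (vsub y u) + mu / 2 * ip m (vsub y u) (vsub y u) - ip m (g v) (vsub y v)
     - L / 2 * ip m (vsub y v) (vsub y v) + ip m (g v) (vsub y' v) + mu / 2 * ip m (vsub y' v) (vsub y' v)
     - ip m (g u) (vsub y' u) - L / 2 * ip m (vsub y' u) (vsub y' u)).
  assert (HS : S <= 0) by (unfold S; lra).
  set (s := 2 * t - (L - mu) * t * t).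
  assert (Hid : ip m (fun j => (u j - al * g u j) - (v j - al * g v j)) (fun j => (u j - al * g u j) - (v j - al * g v j))
     - (1 - al * mu) ^ 2 * ip m (vsub u v) (vsub u v)
     = 2 * al * (1 - al * mu) * S + (al * al - 2 * al * (1 - al * mu) * s) * ip m Dh Dh).
  { unfold S, s, ip. fsum_merge. apply fsum_ext. intros j Hj. unfold y, y', Dh, vsub, t. field. lra. }
  assert (Hc2 : al * al - 2 * al * (1 - al * mu) * s <= 0).
  { unfold s, t.
    replace (al * al - 2 * al * (1 - al * mu) * (2 * (al / (2 * (1 - al * mu))) - (L - mu) * (al / (2 * (1 - al * mu))) * (al / (2 * (1 - al * mu)))))
      with (al * al * ((L - mu) * al / (2 * (1 - al * mu)) - 1)) by (field; lra).
    assert ((L - mu) * al / (2 * (1 - al * mu)) <= 1).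
    { apply Rmult_le_reg_r with (2 * (1 - al * mu)); [lra|]. unfold Rdiv. rewrite Rmult_assoc, Rinv_l by lra. lra. }
    assert (0 < al * al) by nra. nra. }
  pose proof (ip_nonneg m Dh).
  assert (0 <= 2 * al * (1 - al * mu)) by nra.
  assert (2 * al * (1 - al * mu) * S <= 0) by nra.
  assert ((al * al - 2 * al * (1 - al * mu) * s) * ip m Dh Dh <= 0) by nra.
  lra.
Qed.

Lemma fsum_const m c : fsum m (fun _ => c) = INR m * c.
Proof. induction m; simpl fsum; [simpl; ring|]. rewrite IHm, S_INR. ring. Qed.

Lemma fsum_mono_len m1 m2 g : (m1 <= m2)%nat -> (forall j, 0 <= g j) -> fsum m1 g <= fsum m2 g.
Proof.
  intros Hm Hg. induction Hm; [lra|]. simpl. pose proof (Hg m). lra.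
Qed.

Lemma bmin_le m g i : (i <= m)%nat -> bmin m g <= g i.
Proof.
  induction m; simpl; intros Hi.
  - replace i with 0%nat by lia. lra.
  - destruct (Nat.eq_dec i (S m)) as [->|Hne].
    + apply Rmin_r.
    + eapply Rle_trans; [apply Rmin_l| apply IHm; lia].
Qed.

Lemma bmin_pos m g : (forall i, (i <= m)%nat -> 0 < g i) -> 0 < bmin m g.
Proof.
  induction m; simpl; intros H; [apply H; lia|].
  apply Rmin_glb_lt; [apply IHm; intros; apply H; lia| apply H; lia].
Qed.

Lemma bmax_ge m g i : (i <= m)%nat -> g i <= bmax m g.
Proof.
  induction m; simpl; intros Hi.
  - replace i with 0%nat by lia. lra.
  - destruct (Nat.eq_dec i (S m)) as [->|Hne].
    + apply Rmax_r.
    + eapply Rle_trans; [apply IHm; lia| apply Rmax_l].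
Qed.

Lemma bmax_lt m g c : (forall i, (i <= m)%nat -> g i < c) -> bmax m g < c.
Proof.
  induction m; simpl; intros H; [apply H; lia|].
  apply Rmax_lub_lt; [apply IHm; intros; apply H; lia| apply H; lia].
Qed.

Lemma first_occ (P : nat -> bool) t : P t = true -> exists t', (t' <= t)%nat /\ P t' = true /\ forall s, (s < t')%nat -> P s = false.
Proof.
  induction t as [t IH] using (well_founded_induction lt_wf). intros Ht.
  destruct (classic (exists s, (s < t)%nat /\ P s = true)) as [[s [Hs Ps]]|Hno].
  - destruct (IH s Hs Ps) as [t' [H1 [H2 H3]]]. exists t'. repeat split; auto; lia.
  - exists t. repeat split; auto. intros s Hs. destruct (P s) eqn:E; auto. elim Hno. eauto.
Qed.

Section Main.
Variables (N : nat) (n : nat -> nat) (f : nat -> vec -> R) (grad : nat -> vec -> vec)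
  (L mu : nat -> R) (G : bvec -> ER) (gamma : nat -> R).
Hypothesis HN : (1 <= N)%nat.
Hypothesis Hgrad : forall i, (i < N)%nat -> has_gradient (n i) (f i) (grad i).
Hypothesis HL : forall i, (i < N)%nat -> 0 <= L i /\ lipschitz_grad (n i) (grad i) (L i).
Hypothesis Hmu : forall i, (i < N)%nat -> 0 < mu i /\ strongly_convex (n i) (f i) (mu i).
Hypothesis HGp : proper G.
Hypothesis HGcvx : convexG G.
Hypothesis Hgamma : forall i, (i < N)%nat -> 0 < gamma i /\ gamma i * L i < INR N.

Definition Qn (a : bvec) : R := wbnsq N n (fun i => / gamma i) a.
Definition Bn (a b : bvec) : R := fsum N (fun i => / gamma i * ip (n i) (a i) (b i)).
Definition pstep (x : bvec) : bvec := fb_step N grad gamma x.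

Lemma Qn_expand a b t : Qn (fun i j => a i j + t * b i j) = Qn a + 2 * t * Bn a b + t * t * Qn b.
Proof.
  unfold Qn, wbnsq, Bn. fsum_merge. apply fsum_ext; intros i Hi. unfold ip. fsum_merge.
  apply fsum_ext; intros; ring.
Qed.

Lemma Qn_nonneg a : 0 <= Qn a.
Proof.
  unfold Qn, wbnsq. apply fsum_nonneg. intros i Hi. destruct (Hgamma i Hi).
  apply Rmult_le_pos; [left; apply Rinv_0_lt_compat; auto| apply ip_nonneg].
Qed.

Lemma G_fin x : G x <> pinf -> G x = fin (ERv (G x)).
Proof. destruct HGp as [Hn _]. specialize (Hn x). destruct (G x); simpl; congruence. Qed.

Lemma vi x z w gz gw : in_T N n grad G gamma x z -> G z = fin gz -> G w = fin gw ->
  gz <= gw + Bn (bsub z (pstep x)) (bsub w z).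
Proof.
  intros HT Hz Hw.
  apply (le_of_small _ _ (Qn (bsub w z) / 2) 1); [lra|]. intros t Ht.
  unfold pstep. set (p := fb_step N grad gamma x).
  set (c := bcomb t w z).
  pose proof (HGcvx w z gw gz t Hw Hz Ht) as Hc. fold c in Hc.
  destruct HGp as [Hn _].
  destruct (G c) eqn:HGc; [elim (Hn c); auto| |simpl in Hc; tauto]. simpl in Hc.
  specialize (HT c). unfold prox_obj in HT. rewrite Hz, HGc in HT. simpl in HT. fold p in HT.
  replace (bsub c p) with (fun i j => bsub z p i j + t * bsub w z i j) in HT
    by (unfold c, bcomb, bsub; extensionality i; extensionality j; ring).
  pose proof (Qn_expand (bsub z p) (bsub w z) t) as HE.
  pose proof (Qn_nonneg (bsub w z)).
  unfold Qn in *. rewrite HE in HT.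
  apply Rmult_le_reg_l with t; [lra|].
  nra.
Qed.

Lemma INR_N_pos : 0 < INR N.
Proof. apply lt_0_INR. lia. Qed.

Lemma ip_gradF u i d : ip (n i) (gradF N grad u i) d = / INR N * ip (n i) (grad i (u i)) d.
Proof. unfold ip, gradF. rewrite <- fsum_scal. apply fsum_ext; intros; ring. Qed.

Lemma F_upper u w : Fsm N f w <= Fsm N f u + bip N n (gradF N grad u) (bsub w u)
   + 1/2 * fsum N (fun i => L i / INR N * ip (n i) (bsub w u i) (bsub w u i)).
Proof.
  pose proof INR_N_pos as HNp.
  unfold Fsm, bip. fsum_merge. apply fsum_le. intros i Hi.
  rewrite ip_gradF. destruct (HL i Hi) as [HL0 HLi].
  pose proof (descent (n i) (f i) (grad i) (L i) (u i) (w i) HLi (Hgrad i Hi)) as Hd.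
  change (vsub (w i) (u i)) with (bsub w u i) in Hd.
  assert (0 < / INR N) by (apply Rinv_0_lt_compat; auto).
  unfold Rdiv. nra.
Qed.

Lemma F_lower u w : Fsm N f u + bip N n (gradF N grad u) (bsub w u)
   + 1/2 * fsum N (fun i => mu i / INR N * ip (n i) (bsub w u i) (bsub w u i)) <= Fsm N f w.
Proof.
  pose proof INR_N_pos as HNp.
  unfold Fsm, bip. fsum_merge. apply fsum_le. intros i Hi.
  rewrite ip_gradF. destruct (Hmu i Hi) as [Hm0 Hmi].
  pose proof (sc_lower (n i) (f i) (grad i) (mu i) (u i) (w i) Hmi (Hgrad i Hi)) as Hd.
  change (vsub (w i) (u i)) with (bsub w u i) in Hd.
  assert (0 < / INR N) by (apply Rinv_0_lt_compat; auto).
  unfold Rdiv. nra.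
Qed.

Definition fobj (x w : bvec) : R :=
  Fsm N f x + bip N n (gradF N grad x) (bsub w x) + 1 / 2 * wbnsq N n (fun i => / gamma i) (bsub w x).
Definition Kc (x : bvec) : R :=
  Fsm N f x - 1 / 2 * fsum N (fun i => gamma i * ip (n i) (gradF N grad x i) (gradF N grad x i)).

Lemma fobj_prox x w : fobj x w = 1 / 2 * Qn (bsub w (pstep x)) + Kc x.
Proof.
  assert (Hs : bip N n (gradF N grad x) (bsub w x) + 1/2 * wbnsq N n (fun i => / gamma i) (bsub w x)
     = 1 / 2 * Qn (bsub w (pstep x)) - 1 / 2 * fsum N (fun i => gamma i * ip (n i) (gradF N grad x i) (gradF N grad x i))).
  { unfold Qn, wbnsq, bip, pstep, fb_step. fsum_merge. apply fsum_ext. intros i Hi. destruct (Hgamma i Hi) as [Hg _].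
    unfold ip, bsub. fsum_merge. apply fsum_ext; intros j Hj. field; lra. }
  unfold fobj, Kc. lra.
Qed.

Lemma Gz_fin x z : in_T N n grad G gamma x z -> G z <> pinf.
Proof.
  intros HT. destruct HGp as [Hn [w0 Hw0]]. specialize (HT w0).
  unfold prox_obj in HT. intros Hz. rewrite Hz in HT. simpl in HT.
  destruct (G w0) eqn:E; simpl in HT; try tauto; apply (Hn w0); auto.
Qed.

Definition Vv (x z : bvec) : R := fobj x z + ERv (G z).

Lemma Vv_le x z w gw : in_T N n grad G gamma x z -> G w = fin gw -> Vv x z <= fobj x w + gw.
Proof.
  intros HT Hw. pose proof (G_fin z (Gz_fin x z HT)) as Hz.
  specialize (HT w). unfold prox_obj in HT. rewrite Hz, Hw in HT. simpl in HT.
  unfold Vv. rewrite !fobj_prox. unfold Qn, pstep in *. lra.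
Qed.

Lemma FBE_val x z : in_T N n grad G gamma x z -> FBE N n f grad G gamma x = fin (Vv x z).
Proof.
  intros HT. unfold FBE. apply ER_inf_min.
  - exists z. pose proof (G_fin z (Gz_fin x z HT)) as Hz. rewrite Hz. reflexivity.
  - intros u [w ->]. destruct HGp as [Hn _].
    destruct (G w) eqn:Hw; simpl; auto.
    + elim (Hn w); auto.
    + pose proof (Vv_le x z w r HT Hw). unfold fobj in H. lra.
Qed.

Lemma Phi_z_le x z : in_T N n grad G gamma x z -> Fsm N f z + ERv (G z) <= Vv x z.
Proof.
  intros HT. pose proof (F_upper x z) as Hu.
  assert (H : fsum N (fun i => L i / INR N * ip (n i) (bsub z x i) (bsub z x i))
              <= wbnsq N n (fun i => / gamma i) (bsub z x)).
  { unfold wbnsq. apply fsum_le. intros i Hi. destruct (Hgamma i Hi) as [Hg HgL]. destruct (HL i Hi) as [HL0 _].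
    pose proof (ip_nonneg (n i) (bsub z x i)). pose proof INR_N_pos.
    apply Rmult_le_compat_r; auto.
    apply Rmult_le_reg_r with (INR N * gamma i); [nra|].
    replace (L i / INR N * (INR N * gamma i)) with (gamma i * L i) by (field; lra).
    replace (/ gamma i * (INR N * gamma i)) with (INR N) by (field; lra). lra. }
  unfold Vv, fobj. lra.
Qed.

Lemma err_bound x z xs m del : in_T N n grad G gamma x z -> Phi N f G xs = fin m ->
  0 < del -> (forall i, (i < N)%nat -> del <= gamma i * mu i / INR N) ->
  Vv x z - m <= (/ del - 1) / 2 * Qn (bsub x z).
Proof.
  intros HT Hxs Hd Hdi.
  unfold Phi in Hxs. destruct (G xs) eqn:Hgs; simpl in Hxs; try discriminate. injection Hxs as Hm.
  pose proof (G_fin z (Gz_fin x z HT)) as Hz.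
  pose proof (vi x z xs (ERv (G z)) r HT Hz Hgs) as Hv.
  pose proof (F_lower x xs) as Hl.
  assert (Hk : bip N n (gradF N grad x) (bsub z x) + 1 / 2 * wbnsq N n (fun i => / gamma i) (bsub z x)
     + Bn (bsub z (pstep x)) (bsub xs z) - bip N n (gradF N grad x) (bsub xs x)
     - 1 / 2 * fsum N (fun i => mu i / INR N * ip (n i) (bsub xs x i) (bsub xs x i))
     <= (/ del - 1) / 2 * Qn (bsub x z)).
  { unfold bip, wbnsq, Bn, Qn, wbnsq. fsum_merge. apply fsum_le. intros i Hi.
    destruct (Hgamma i Hi) as [Hg _]. destruct (Hmu i Hi) as [Hm0 _]. pose proof INR_N_pos as HNp.
    pose proof (Hdi i Hi) as Hdi'.
    unfold ip, bsub, pstep, fb_step. fsum_merge. apply fsum_le. intros j Hj.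
    apply (pw_err (gamma i) (mu i / INR N) (/ del)); auto.
    - apply Rdiv_lt_0_compat; auto.
    - apply Rmult_le_reg_l with del; auto.
      replace (del * (/ del * gamma i * (mu i / INR N))) with (gamma i * mu i / INR N) by (field; lra). lra. }
  unfold Vv, fobj. rewrite <- Hm. lra.
Qed.

Lemma mu_le_L i : (i < N)%nat -> (1 <= n i)%nat -> mu i <= L i.
Proof.
  intros Hi Hn.
  set (u := fun _ : nat => 0). set (w := fun j : nat => if Nat.eqb j 0 then 1 else 0).
  destruct (Hmu i Hi) as [_ Hsc]. destruct (HL i Hi) as [_ HLi].
  pose proof (sc_lower (n i) (f i) (grad i) (mu i) u w Hsc (Hgrad i Hi)).
  pose proof (descent (n i) (f i) (grad i) (L i) u w HLi (Hgrad i Hi)).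
  assert (Hp : 1 <= ip (n i) (vsub w u) (vsub w u)).
  { pose proof (fsum_term_le (n i) (fun j => vsub w u j * vsub w u j) 0%nat ltac:(intros; nra) ltac:(lia)) as Ht.
    cbv beta in Ht. assert (Hw0 : vsub w u 0%nat = 1) by (unfold vsub, w, u; simpl; ring).
    rewrite Hw0 in Ht. unfold ip. lra. }
  nra.
Qed.

Lemma contraction xa za xb zb del :
  in_T N n grad G gamma xa za -> in_T N n grad G gamma xb zb ->
  0 <= del -> (forall i, (i < N)%nat -> del <= gamma i * mu i / INR N) ->
  Qn (bsub za zb) <= (1 - del) ^ 2 * Qn (bsub xa xb).
Proof.
  intros Ha Hb Hd Hdi.
  pose proof (G_fin za (Gz_fin xa za Ha)) as Hza. pose proof (G_fin zb (Gz_fin xb zb Hb)) as Hzb.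
  pose proof (vi xa za zb _ _ Ha Hza Hzb) as V1. pose proof (vi xb zb za _ _ Hb Hzb Hza) as V2.
  set (pa := pstep xa) in *. set (pb := pstep xb) in *.
  assert (Hid : 2 * (Bn (bsub za pa) (bsub zb za) + Bn (bsub zb pb) (bsub za zb))
     + Qn (fun i j => (pa i j - pb i j) - (za i j - zb i j)) = Qn (bsub pa pb) - Qn (bsub za zb)).
  { unfold Bn, Qn, wbnsq. fsum_merge. apply fsum_ext. intros i Hi. unfold ip, bsub. fsum_merge.
    apply fsum_ext; intros; ring. }
  pose proof (Qn_nonneg (fun i j => (pa i j - pb i j) - (za i j - zb i j))).
  assert (Hpz : Qn (bsub za zb) <= Qn (bsub pa pb)) by lra.
  assert (Hfw : Qn (bsub pa pb) <= (1 - del) ^ 2 * Qn (bsub xa xb)).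
  { unfold Qn, wbnsq. rewrite <- fsum_scal. apply fsum_le. intros i Hi.
    destruct (Hgamma i Hi) as [Hg HgL]. destruct (Hmu i Hi) as [Hm0 Hsc]. destruct (HL i Hi) as [HL0 HLi].
    pose proof INR_N_pos as HNp. pose proof (Hdi i Hi) as Hdi'.
    destruct (Nat.eq_dec (n i) 0) as [Hni|Hni].
    - unfold ip. rewrite Hni. simpl. lra.
    - assert (HmL : mu i <= L i) by (apply mu_le_L; auto; lia).
      set (al := gamma i / INR N).
      assert (Hal : 0 < al) by (apply Rdiv_lt_0_compat; auto).
      assert (HaL : al * L i < 1).
      { unfold al. apply Rmult_lt_reg_r with (INR N); auto. replace (gamma i / INR N * L i * INR N) with (gamma i * L i) by (field; lra). lra. }
      pose proof (fwd_contr (n i) (f i) (grad i) (mu i) (L i) al (xa i) (xb i) Hsc (Hgrad i Hi) HLi Hal HaL ltac:(lra) HmL) as Hc.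
      assert (Heq : ip (n i) (bsub pa pb i) (bsub pa pb i) =
         ip (n i) (fun j => (xa i j - al * grad i (xa i) j) - (xb i j - al * grad i (xb i) j))
                  (fun j => (xa i j - al * grad i (xa i) j) - (xb i j - al * grad i (xb i) j))).
      { apply ip_ext; intros; unfold bsub, pa, pb, pstep, fb_step, gradF, al; field; lra. }
      rewrite Heq. change (bsub xa xb i) with (vsub (xa i) (xb i)).
      assert (Hdi2 : del <= al * mu i) by (unfold al; replace (gamma i / INR N * mu i) with (gamma i * mu i / INR N) by (field; lra); lra).
      assert (Hal1 : al * mu i <= 1) by nra.
      assert (Hsq : (1 - al * mu i) ^ 2 <= (1 - del) ^ 2) by (simpl; nra).
      pose proof (ip_nonneg (n i) (vsub (xa i) (xb i))).
      assert (0 < / gamma i) by (apply Rinv_0_lt_compat; auto).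
      assert ((1 - al * mu i) ^ 2 * ip (n i) (vsub (xa i) (xb i)) (vsub (xa i) (xb i)) <=
              (1 - del) ^ 2 * ip (n i) (vsub (xa i) (xb i)) (vsub (xa i) (xb i))) by (apply Rmult_le_compat_r; auto).
      nra. }
  lra.
Qed.

Lemma ip_zero_l m a v : ip m (fun j => a j - a j) v = 0.
Proof. unfold ip. rewrite <- (fsum_zero m). apply fsum_ext; intros; ring. Qed.
Lemma ip_zero_r m a v : ip m v (fun j => a j - a j) = 0.
Proof. unfold ip. rewrite <- (fsum_zero m). apply fsum_ext; intros; ring. Qed.
Lemma ip_scal_l m c u v : ip m (fun j => c * u j) v = c * ip m u v.
Proof. unfold ip. rewrite <- fsum_scal. apply fsum_ext; intros; ring. Qed.

Lemma decrease I x z k Dl : algorithm_BC N n grad G gamma I x z ->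
  (forall i, (i < N)%nat -> gamma i * L i / INR N <= Dl) ->
  Vv (x (S k)) (z (S k)) <= Vv (x k) (z k) - (1 - Dl) / 2 * Qn (bsub (x (S k)) (x k)).
Proof.
  intros [Hidx [HT Hupd]] HDl.
  pose proof (G_fin (z k) (Gz_fin (x k) (z k) (HT k))) as Hz.
  pose proof (Vv_le (x (S k)) (z (S k)) (z k) _ (HT (S k)) Hz) as H1.
  assert (H2 : fobj (x (S k)) (z k) <= fobj (x k) (z k) - (1 - Dl) / 2 * Qn (bsub (x (S k)) (x k))).
  { unfold fobj, Fsm, bip, wbnsq, Qn, wbnsq. fsum_merge. apply fsum_le. intros i Hi.
    pose proof INR_N_pos as HNp. destruct (Hgamma i Hi) as [Hg HgL]. destruct (HL i Hi) as [HL0 HLi].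
    pose proof (HDl i Hi) as HDi.
    pose proof (Hupd k i) as Hu.
    unfold bsub, gradF. cbv beta.
    destruct (I (S k) i).
    - rewrite Hu. rewrite !ip_zero_l, !ip_zero_r.
      pose proof (descent (n i) (f i) (grad i) (L i) (x k i) (z k i) HLi (Hgrad i Hi)) as Hd.
      unfold vsub in Hd. rewrite ip_scal_l.
      set (D := ip (n i) (fun j => z k i j - x k i j) (fun j => z k i j - x k i j)) in *.
      set (C := ip (n i) (grad i (x k i)) (fun j => z k i j - x k i j)) in *.
      assert (HD : 0 <= D) by apply ip_nonneg.
      assert (HgD : L i / INR N <= Dl / gamma i).
      { apply Rmult_le_reg_r with (INR N * gamma i); [nra|].
        replace (L i / INR N * (INR N * gamma i)) with (gamma i * L i / INR N * INR N) by (field; lra).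
        replace (Dl / gamma i * (INR N * gamma i)) with (Dl * INR N) by (field; lra).
        apply Rmult_le_compat_r; lra. }
      assert (Hb : L i / INR N * D <= Dl / gamma i * D) by (apply Rmult_le_compat_r; auto).
      assert (Hinv : / INR N * f i (z k i) <= / INR N * (f i (x k i) + C + L i / 2 * D)).
      { apply Rmult_le_compat_l; [left; apply Rinv_0_lt_compat; auto| exact Hd]. }
      replace (/ INR N * 0) with 0 by ring.
      unfold Rdiv in *. nra.
    - rewrite Hu. rewrite !ip_zero_l. lra. }
  unfold Vv in *. lra.
Qed.

Lemma pw_tri th c a b : 0 < th -> 0 <= c ->
  c * ((a + b) * (a + b)) <= (1 + th) * (c * (a * a)) + (1 + / th) * (c * (b * b)).
Proof.
  intros Ht Hc.
  assert (Hid : th * ((1 + th) * (c * (a * a)) + (1 + / th) * (c * (b * b)) - c * ((a + b) * (a + b)))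
     = c * ((th * a - b) * (th * a - b))) by (field; lra).
  assert (0 <= c * ((th * a - b) * (th * a - b))) by (apply Rmult_le_pos; auto; pose proof (Rle_0_sqr (th*a-b)); unfold Rsqr in *; lra).
  set (X := (1 + th) * (c * (a * a)) + (1 + / th) * (c * (b * b)) - c * ((a + b) * (a + b))) in Hid.
  assert (0 <= X). { apply (Rmult_le_reg_l th); auto. rewrite Rmult_0_r, Hid. lra. }
  unfold X in *. lra.
Qed.

Lemma Qn_term a i : (i < N)%nat -> / gamma i * ip (n i) (a i) (a i) <= Qn a.
Proof.
  intros Hi. unfold Qn, wbnsq.
  apply (fsum_term_le N (fun i => / gamma i * ip (n i) (a i) (a i))); auto.
  intros j Hj. destruct (Hgamma j Hj). apply Rmult_le_pos; [left; apply Rinv_0_lt_compat; auto| apply ip_nonneg].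
Qed.

Lemma Qn_tri a b th : 0 < th -> Qn (fun i j => a i j + b i j) <= (1 + th) * Qn a + (1 + / th) * Qn b.
Proof.
  intros Ht. unfold Qn, wbnsq. fsum_merge. apply fsum_le. intros i Hi.
  destruct (Hgamma i Hi) as [Hg _]. assert (0 <= / gamma i) by (left; apply Rinv_0_lt_compat; auto).
  unfold ip. fsum_merge. apply fsum_le. intros j Hj. apply pw_tri; auto.
Qed.

Definition Sq (x : nat -> bvec) k := Qn (bsub (x (S k)) (x k)).
Definition Wsum (x : nat -> bvec) k0 P := fsum P (fun j => Sq x (k0 + j)).

Lemma Wsum_term x k0 P t : (t < P)%nat -> Sq x (k0 + t) <= Wsum x k0 P.
Proof. intros Ht. unfold Wsum. apply (fsum_term_le P (fun j => Sq x (k0 + j))); auto. intros; apply Qn_nonneg. Qed.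

Lemma Wsum_nonneg x k0 P : 0 <= Wsum x k0 P.
Proof. unfold Wsum. apply fsum_nonneg. intros; apply Qn_nonneg. Qed.

Lemma window I x z k0 P del beta th :
  algorithm_BC N n grad G gamma I x z -> 0 <= del ->
  (forall i, (i < N)%nat -> del <= gamma i * mu i / INR N) -> 0 < th ->
  (forall i, (i < N)%nat -> exists t, (t < P)%nat /\ I (S (k0 + t)%nat) i = true /\ x (k0 + t)%nat i = x k0 i) ->
  (forall t, (t < P)%nat -> Qn (bsub (x (k0 + t)%nat) (x k0)) <= beta * Wsum x k0 P) ->
  Qn (bsub (x k0) (z k0)) <= INR N * ((1 + th) * Wsum x k0 P + (1 + / th) * ((1 - del) ^ 2 * (beta * Wsum x k0 P))).
Proof.
  intros Halg Hd Hdi Hth Hcov HQb.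
  destruct Halg as [Hidx [HT Hupd]].
  unfold Qn at 1. unfold wbnsq. rewrite <- fsum_const. apply fsum_le. intros i Hi.
  destruct (Hcov i Hi) as [t [Ht [HI Hx]]]. set (k := (k0 + t)%nat) in *.
  destruct (Hgamma i Hi) as [Hg _]. assert (Hgi : 0 <= / gamma i) by (left; apply Rinv_0_lt_compat; auto).
  set (d := fun j => x k i j - z k i j). set (e := fun j => z k i j - z k0 i j).
  assert (S1 : / gamma i * ip (n i) (bsub (x k0) (z k0) i) (bsub (x k0) (z k0) i)
             <= (1 + th) * (/ gamma i * ip (n i) d d) + (1 + / th) * (/ gamma i * ip (n i) e e)).
  { unfold bsub, d, e. rewrite <- Hx. unfold ip. fsum_merge. apply fsum_le. intros j Hj.
    replace (x k i j - z k0 i j) with ((x k i j - z k i j) + (z k i j - z k0 i j)) by ring.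
    apply pw_tri; auto. }
  assert (S2 : / gamma i * ip (n i) d d <= Wsum x k0 P).
  { eapply Rle_trans; [|apply (Wsum_term x k0 P t Ht)]. fold k. unfold Sq.
    eapply Rle_trans; [|apply (Qn_term _ i Hi)].
    right. f_equal. pose proof (Hupd k i) as Hu. rewrite HI in Hu.
    unfold ip, bsub, d. rewrite Hu. apply fsum_ext; intros; ring. }
  assert (S3 : / gamma i * ip (n i) e e <= (1 - del) ^ 2 * (beta * Wsum x k0 P)).
  { eapply Rle_trans; [apply (Qn_term (bsub (z k) (z k0)) i Hi)|].
    eapply Rle_trans; [apply (contraction (x k) (z k) (x k0) (z k0) del (HT k) (HT k0) Hd Hdi)|].
    apply Rmult_le_compat_l; [apply pow2_ge_0| apply HQb; auto]. }
  assert (0 <= 1 + / th) by (assert (0 < / th) by (apply Rinv_0_lt_compat; auto); lra).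
  assert ((1 + th) * (/ gamma i * ip (n i) d d) <= (1 + th) * Wsum x k0 P) by (apply Rmult_le_compat_l; lra).
  assert ((1 + / th) * (/ gamma i * ip (n i) e e) <= (1 + / th) * ((1 - del) ^ 2 * (beta * Wsum x k0 P))) by (apply Rmult_le_compat_l; lra).
  lra.
Qed.

Lemma decrease_window I x z Dl k0 P : algorithm_BC N n grad G gamma I x z ->
  (forall i, (i < N)%nat -> gamma i * L i / INR N <= Dl) ->
  Vv (x (k0 + P)%nat) (z (k0 + P)%nat) <= Vv (x k0) (z k0) - (1 - Dl) / 2 * Wsum x k0 P.
Proof.
  intros Halg HDl. induction P.
  - rewrite Nat.add_0_r. unfold Wsum. simpl. lra.
  - rewrite Nat.add_succ_r. pose proof (decrease I x z (k0 + P) Dl Halg HDl) as Hd.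
    unfold Wsum in *. simpl fsum. unfold Sq at 2. lra.
Qed.

Lemma Vv_ge_m x z xs m : in_T N n grad G gamma x z -> is_minimizer N f G xs -> Phi N f G xs = fin m -> m <= Vv x z.
Proof.
  intros HT Hmin Hxs. pose proof (Hmin z) as H. rewrite Hxs in H. unfold Phi in H.
  rewrite (G_fin z (Gz_fin x z HT)) in H. simpl in H. pose proof (Phi_z_le x z HT). lra.
Qed.

Lemma rate_step I x z k0 P xs m del Dl beta th :
  algorithm_BC N n grad G gamma I x z -> is_minimizer N f G xs -> Phi N f G xs = fin m ->
  0 < del -> del < 1 -> (forall i, (i < N)%nat -> del <= gamma i * mu i / INR N) ->
  (forall i, (i < N)%nat -> gamma i * L i / INR N <= Dl) -> Dl < 1 -> 0 < th -> 0 <= beta ->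
  (forall i, (i < N)%nat -> exists t, (t < P)%nat /\ I (S (k0 + t)%nat) i = true /\ x (k0 + t)%nat i = x k0 i) ->
  (forall t, (t < P)%nat -> Qn (bsub (x (k0 + t)%nat) (x k0)) <= beta * Wsum x k0 P) ->
  Vv (x (k0 + P)%nat) (z (k0 + P)%nat) - m <=
  (1 - del * (1 - Dl) / (INR N * ((1 + th) + (1 + / th) * (1 - del) ^ 2 * beta) * (1 - del))) * (Vv (x k0) (z k0) - m).
Proof.
  intros Halg Hmin Hxs Hd0 Hd1 Hdi HDl HDl1 Hth Hb Hcov HQb.
  pose proof (proj1 (proj2 Halg)) as HT.
  set (K := INR N * ((1 + th) + (1 + / th) * (1 - del) ^ 2 * beta)).
  set (W := Wsum x k0 P).
  set (A := Vv (x k0) (z k0) - m).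
  assert (HNp := INR_N_pos).
  assert (Hith : 0 < / th) by (apply Rinv_0_lt_compat; auto).
  assert (HK : 0 < K). { unfold K. apply Rmult_lt_0_compat; auto. assert (0 <= (1 + / th) * (1 - del) ^ 2 * beta).
    { apply Rmult_le_pos; auto. apply Rmult_le_pos; [lra| apply pow2_ge_0]. } lra. }
  assert (HW : 0 <= W) by apply Wsum_nonneg.
  assert (HA : 0 <= A) by (unfold A; pose proof (Vv_ge_m _ _ xs m (HT k0) Hmin Hxs); lra).
  pose proof (err_bound (x k0) (z k0) xs m del (HT k0) Hxs Hd0 Hdi) as Herr. fold A in Herr.
  pose proof (window I x z k0 P del beta th Halg ltac:(lra) Hdi Hth Hcov HQb) as Hwin. fold W in Hwin.
  assert (Hwin' : Qn (bsub (x k0) (z k0)) <= K * W) by (unfold K; nra).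
  pose proof (decrease_window I x z Dl k0 P Halg HDl) as Hdec. fold W in Hdec.
  set (c := del * (1 - Dl) / (K * (1 - del))).
  assert (Hc0 : 0 <= c). { unfold c. apply Rmult_le_pos; [nra|]. left. apply Rinv_0_lt_compat. nra. }
  assert (Hco : 0 <= (/ del - 1) / 2).
  { assert (1 < / del). { rewrite <- Rinv_1. apply Rinv_lt_contravar; lra. } lra. }
  assert (HA2 : A <= (/ del - 1) / 2 * (K * W)).
  { eapply Rle_trans; [exact Herr|]. apply Rmult_le_compat_l; auto. }
  assert (HcA : c * A <= c * ((/ del - 1) / 2 * (K * W))) by (apply Rmult_le_compat_l; auto).
  assert (Heq : c * ((/ del - 1) / 2 * (K * W)) = (1 - Dl) / 2 * W) by (unfold c; field; lra).
  fold K. fold c. fold A. unfold A in *. lra.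
Qed.

Lemma Qn_zero a : Qn (bsub a a) = 0.
Proof.
  unfold Qn, wbnsq. rewrite <- (fsum_zero N). apply fsum_ext. intros i Hi.
  unfold bsub. rewrite ip_zero_l. ring.
Qed.

Lemma not_updated I x z k0 i t : algorithm_BC N n grad G gamma I x z ->
  (forall s, (s < t)%nat -> I (S (k0 + s)%nat) i = false) -> x (k0 + t)%nat i = x k0 i.
Proof.
  intros [_ [_ Hupd]]. induction t; intros Hs.
  - rewrite Nat.add_0_r. reflexivity.
  - rewrite Nat.add_succ_r. rewrite Hupd. rewrite Hs by lia. apply IHt. intros; apply Hs; lia.
Qed.

Lemma cov_ec I x z T k0 : algorithm_BC N n grad G gamma I x z -> essentially_cyclic N I T ->
  forall i, (i < N)%nat -> exists t, (t < T)%nat /\ I (S (k0 + t)%nat) i = true /\ x (k0 + t)%nat i = x k0 i.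
Proof.
  intros Halg Hec i Hi. destruct (Hec k0 i Hi) as [t1 [Ht1 HI1]].
  destruct (first_occ (fun s => I (S (k0 + s)%nat) i) (t1 - 1)) as [t' [Ht' [HP Hmin]]].
  { replace (S (k0 + (t1 - 1))) with (k0 + t1)%nat by lia. auto. }
  exists t'. repeat split; auto; [lia|]. apply (not_updated I x z); auto.
Qed.

Lemma Qb_ec I x z k0 : algorithm_BC N n grad G gamma I x z ->
  forall t, Qn (bsub (x (k0 + t)%nat) (x k0)) <= INR t * Wsum x k0 t.
Proof.
  intros Halg t. induction t.
  - rewrite Nat.add_0_r, Qn_zero. simpl. lra.
  - replace (bsub (x (k0 + S t)%nat) (x k0)) with (fun i j => bsub (x (k0 + t)%nat) (x k0) i j + bsub (x (S (k0 + t))) (x (k0 + t)%nat) i j)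
      by (rewrite Nat.add_succ_r; extensionality i; extensionality j; unfold bsub; ring).
    assert (HW : Wsum x k0 (S t) = Wsum x k0 t + Sq x (k0 + t)) by reflexivity.
    pose proof (Wsum_nonneg x k0 t). pose proof (Qn_nonneg (bsub (x (S (k0 + t))) (x (k0 + t)%nat))).
    destruct t as [|t'].
    + rewrite Nat.add_0_r in *. try (replace (fun i j => bsub (x k0) (x k0) i j + bsub (x (S k0)) (x k0) i j) with (bsub (x (S k0)) (x k0))
        by (extensionality i; extensionality j; unfold bsub; ring)).
      rewrite HW. unfold Wsum. simpl fsum. try rewrite Nat.add_0_r. unfold Sq. simpl INR. lra.
    + set (tt := INR (S t')) in *. assert (Htt : 0 < tt) by (apply lt_0_INR; lia).
      eapply Rle_trans; [apply (Qn_tri _ _ (/ tt)); apply Rinv_0_lt_compat; auto|].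
      rewrite Rinv_inv. rewrite HW, S_INR. fold tt. unfold Sq.
      assert (Hx : (1 + / tt) * Qn (bsub (x (k0 + S t')%nat) (x k0)) <= (1 + / tt) * (tt * Wsum x k0 (S t'))).
      { apply Rmult_le_compat_l; auto. assert (0 < / tt) by (apply Rinv_0_lt_compat; auto). lra. }
      replace ((1 + / tt) * (tt * Wsum x k0 (S t'))) with ((tt + 1) * Wsum x k0 (S t')) in Hx by (field; lra).
      lra.
Qed.

Lemma divmod_N nu s : (s < N)%nat -> ((N * nu + s) / N = nu /\ (N * nu + s) mod N = s)%nat.
Proof.
  intros Hs. split.
  - rewrite (Nat.mul_comm N nu), Nat.div_add_l by lia. rewrite Nat.div_small by lia. lia.
  - rewrite Nat.add_comm, Nat.mul_comm, Nat.Div0.mod_add. apply Nat.mod_small; auto.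
Qed.

Lemma shuffled_fact (I : nat -> nat -> bool) (pi : nat -> nat -> nat) (nu s i : nat) : (forall k i, I (S k) i = true <-> i = pi (Nat.div k N) (Nat.modulo k N)) ->
  (s < N)%nat -> (I (S (N * nu + s)%nat) i = true <-> i = pi nu s).
Proof. intros H Hs. destruct (divmod_N nu s Hs) as [H1 H2]. rewrite H, H1, H2. tauto. Qed.

Lemma cov_sh I x z nu : algorithm_BC N n grad G gamma I x z -> shuffled_cyclic N I ->
  forall i, (i < N)%nat -> exists t, (t < N)%nat /\ I (S (N * nu + t)%nat) i = true /\ x (N * nu + t)%nat i = x (N * nu)%nat i.
Proof.
  intros Halg [pi [Hperm HI]] i Hi.
  destruct (Hperm nu) as [Hb Hinj].
  destruct (proj1 (bInjective_bSurjective Hb) Hinj i Hi) as [t [Ht Hpt]].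
  exists t. split; auto. split.
  - apply (shuffled_fact I pi nu t i HI Ht). auto.
  - apply (not_updated I x z); auto. intros s Hs. destruct (I (S (N * nu + s)%nat) i) eqn:E; auto.
    apply (shuffled_fact I pi nu s i HI) in E; [|lia]. exfalso. assert (s = t) by (apply Hinj; lia). lia.
Qed.

Lemma Qb_sh I x z nu : algorithm_BC N n grad G gamma I x z -> shuffled_cyclic N I ->
  forall t, (t <= N)%nat -> Qn (bsub (x (N * nu + t)%nat) (x (N * nu)%nat)) <= Wsum x (N * nu) t.
Proof.
  intros Halg Hsh. pose proof Halg as [Hidx [HT Hupd]]. destruct Hsh as [pi [Hperm HI]].
  set (k0 := (N * nu)%nat). induction t; intros Ht.
  - rewrite Nat.add_0_r, Qn_zero. unfold Wsum. simpl. lra.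
  - assert (HW : Wsum x k0 (S t) = Wsum x k0 t + Sq x (k0 + t)) by reflexivity. rewrite HW.
    specialize (IHt ltac:(lia)).
    enough (Qn (bsub (x (k0 + S t)%nat) (x k0)) <= Qn (bsub (x (k0 + t)%nat) (x k0)) + Sq x (k0 + t)) by lra.
    unfold Sq, Qn, wbnsq. fsum_merge. apply fsum_le. intros i Hi.
    rewrite Nat.add_succ_r. unfold bsub. pose proof (Hupd (k0 + t)%nat i) as Hu.
    destruct (I (S (k0 + t)) i) eqn:E.
    + assert (Hx : x (k0 + t)%nat i = x k0 i).
      { apply (not_updated I x z); auto. intros s Hs. destruct (I (S (k0 + s)%nat) i) eqn:E2; auto.
        unfold k0 in E, E2. apply (shuffled_fact I pi nu s i HI) in E2; [|lia].
        apply (shuffled_fact I pi nu t i HI) in E; [|lia].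
        destruct (Hperm nu) as [_ Hinj]. exfalso. assert (s = t) by (apply Hinj; lia). lia. }
      rewrite <- Hx. rewrite ip_zero_l. lra.
    + rewrite Hu. rewrite (ip_zero_l (n i) (x (k0 + t)%nat i)). lra.
Qed.

Lemma opt_quad xs m w gw : is_minimizer N f G xs -> Phi N f G xs = fin m -> G w = fin gw ->
  1 / 2 * wbnsq N n (fun i => mu i / INR N) (bsub w xs) <= Fsm N f w + gw - m.
Proof.
  intros Hmin Hxs Hw.
  unfold Phi in Hxs. destruct (G xs) eqn:Hgs; simpl in Hxs; try discriminate. injection Hxs as Hm.
  set (b := bip N n (gradF N grad xs) (bsub w xs)).
  set (Ls := fsum N (fun i => L i / INR N * ip (n i) (bsub w xs i) (bsub w xs i))).
  assert (Hopt : r - b <= gw).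
  { apply (le_of_small _ _ (Ls / 2) 1); [lra|]. intros t Ht.
    set (y := bcomb t w xs).
    pose proof (HGcvx w xs gw r t Hw Hgs Ht) as Hc. fold y in Hc.
    destruct HGp as [Hn _].
    destruct (G y) eqn:HGy; [elim (Hn y); auto| |simpl in Hc; tauto]. simpl in Hc.
    pose proof (Hmin y) as Hmy. unfold Phi in Hmy. rewrite Hgs, HGy in Hmy. simpl in Hmy.
    pose proof (F_upper xs y) as Hu.
    replace (bsub y xs) with (fun i j => t * bsub w xs i j) in Hu
      by (unfold y, bcomb, bsub; extensionality i; extensionality j; ring).
    assert (E1 : bip N n (gradF N grad xs) (fun i j => t * bsub w xs i j) = t * b).
    { unfold b, bip. rewrite <- fsum_scal. apply fsum_ext; intros. apply ip_scal_r. }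
    assert (E2 : fsum N (fun i => L i / INR N * ip (n i) (fun j => t * bsub w xs i j) (fun j => t * bsub w xs i j)) = t * t * Ls).
    { unfold Ls. fsum_merge. apply fsum_ext; intros. unfold ip. fsum_merge. apply fsum_ext; intros; ring. }
    rewrite E1, E2 in Hu.
    assert (0 <= Ls).
    { unfold Ls. apply fsum_nonneg. intros i Hi. destruct (HL i Hi). pose proof INR_N_pos.
      apply Rmult_le_pos; [apply Rle_mult_inv_pos; lra| apply ip_nonneg]. }
    apply Rmult_le_reg_l with t; [lra|]. nra. }
  pose proof (F_lower xs w) as Hl. fold b in Hl.
  unfold wbnsq. lra.
Qed.

Lemma fobj_self x : fobj x x = Fsm N f x.
Proof.
  unfold fobj, bip, wbnsq, bsub.
  rewrite (fsum_ext N _ (fun _ => 0)) by (intros; apply ip_zero_r).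
  rewrite (fsum_ext N (fun i => / gamma i * _) (fun _ => 0)) by (intros; rewrite ip_zero_r; ring).
  rewrite fsum_zero. ring.
Qed.

Lemma rates_of_step I x z P c : algorithm_BC N n grad G gamma I x z -> 0 <= 1 - c ->
  (forall xs m, is_minimizer N f G xs -> Phi N f G xs = fin m -> forall nu,
     Vv (x (P * (nu + 1))%nat) (z (P * (nu + 1))%nat) - m <= (1 - c) * (Vv (x (P * nu)%nat) (z (P * nu)%nat) - m)) ->
  linear_rates N n f grad G gamma mu x z P c.
Proof.
  intros Halg Hc Hstep xs m Hmin Hxs nu.
  pose proof (proj1 (proj2 Halg)) as HT.
  split.
  - intros b Hb. rewrite (FBE_val _ _ (HT _)) in Hb. injection Hb as Hb.
    rewrite (FBE_val _ _ (HT _)). simpl. pose proof (Hstep xs m Hmin Hxs nu). subst b. lra.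
  - intros a Ha.
    assert (Hgeo : forall k, Vv (x (P * k)%nat) (z (P * k)%nat) - m <= (1 - c) ^ k * (Vv (x 0%nat) (z 0%nat) - m)).
    { induction k.
      - rewrite Nat.mul_0_r. simpl. lra.
      - replace (P * S k)%nat with (P * (k + 1))%nat by lia. eapply Rle_trans; [apply (Hstep xs m Hmin Hxs)|].
        simpl. rewrite Rmult_assoc. apply Rmult_le_compat_l; auto. }
    assert (H0 : Vv (x 0%nat) (z 0%nat) <= a).
    { unfold Phi in Ha. destruct (G (x 0%nat)) eqn:Hg0; simpl in Ha; try discriminate. injection Ha as Ha.
      pose proof (Vv_le _ _ _ _ (HT 0%nat) Hg0). rewrite fobj_self in H. lra. }
    assert (Hpow : 0 <= (1 - c) ^ nu) by (apply pow_le; auto).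
    assert (Hg : Vv (x (P * nu)%nat) (z (P * nu)%nat) - m <= (a - m) * (1 - c) ^ nu).
    { eapply Rle_trans; [apply Hgeo|]. rewrite Rmult_comm. apply Rmult_le_compat_r; auto. lra. }
    pose proof (Phi_z_le _ _ (HT (P * nu)%nat)) as Hz.
    pose proof (G_fin _ (Gz_fin _ _ (HT (P * nu)%nat))) as HGz.
    split.
    + unfold Phi. rewrite HGz. simpl. lra.
    + pose proof (opt_quad xs m _ _ Hmin Hxs HGz). lra.
Qed.

Hypothesis Hf_on : forall i, (i < N)%nat -> fun_on (n i) (f i).
Hypothesis HG_on : bfun_on N n G.

Lemma rates_trivial I x z P c : algorithm_BC N n grad G gamma I x z ->
  (forall i, (i < N)%nat -> n i = 0%nat) -> linear_rates N n f grad G gamma mu x z P c.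
Proof.
  intros Halg Hn0 xs m Hmin Hxs nu.
  pose proof (proj1 (proj2 Halg)) as HT.
  assert (Hwb : forall w a, wbnsq N n w a = 0).
  { intros w a. unfold wbnsq. rewrite <- (fsum_zero N). apply fsum_ext. intros i Hi. unfold ip. rewrite (Hn0 i Hi). simpl. ring. }
  assert (Hbip : forall a b, bip N n a b = 0).
  { intros a b. unfold bip. rewrite <- (fsum_zero N). apply fsum_ext. intros i Hi. unfold ip. rewrite (Hn0 i Hi). reflexivity. }
  assert (HF : forall u, Fsm N f u = Fsm N f xs).
  { intros u. unfold Fsm. f_equal. apply fsum_ext. intros i Hi. apply (Hf_on i Hi). intros j Hj. rewrite (Hn0 i Hi) in Hj. lia. }
  assert (HG : forall u, G u = G xs).
  { intros u. apply HG_on. intros i j Hi Hj. rewrite (Hn0 i Hi) in Hj. lia. }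
  unfold Phi in Hxs. destruct (G xs) eqn:Hgs; simpl in Hxs; try discriminate. injection Hxs as Hm.
  assert (HV : forall k, Vv (x k) (z k) = m).
  { intros k. apply Rle_antisym.
    - pose proof (Vv_le _ _ xs r (HT k) Hgs). unfold fobj in H. rewrite Hbip, Hwb, HF in H. lra.
    - apply (Vv_ge_m _ _ xs m (HT k) Hmin). unfold Phi. rewrite Hgs. simpl. f_equal. auto. }
  split.
  - intros b Hb. rewrite (FBE_val _ _ (HT _)), HV in Hb. injection Hb as Hb. subst b.
    rewrite (FBE_val _ _ (HT _)), HV. simpl. lra.
  - intros a Ha. unfold Phi in Ha. rewrite HG, HF in Ha. simpl in Ha. injection Ha as Ha.
    assert (a = m) by lra. subst a.
    split.
    + unfold Phi. rewrite HG, HF. simpl. replace (Fsm N f xs + r - m) with 0 by lra. lra.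
    + rewrite Hwb. replace (Fsm N f xs + r - m) with 0 by lra. lra.
Qed.

Lemma c_mono del Dl K Kt A : 0 < del < 1 -> Dl < 1 -> 0 < K -> K <= Kt -> 0 <= A ->
  (1 - del * (1 - Dl) / (K * (1 - del))) * A <= (1 - del * (1 - Dl) / (Kt * (1 - del))) * A.
Proof.
  intros Hd HDl HK HKt HA. apply Rmult_le_compat_r; auto.
  assert (del * (1 - Dl) / (Kt * (1 - del)) <= del * (1 - Dl) / (K * (1 - del))).
  { unfold Rdiv. apply Rmult_le_compat_l; [nra|]. apply Rinv_le_contravar; nra. }
  lra.
Qed.

Lemma main_sec (Hargmin : exists xs, is_minimizer N f G xs) (I : nat -> nat -> bool) (x z : nat -> bvec)
  (Halg : algorithm_BC N n grad G gamma I x z) :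
  let delta := bmin (N - 1) (fun i => gamma i * mu i / INR N) in
  let Delta := bmax (N - 1) (fun i => gamma i * L i / INR N) in
  (forall T : nat, (1 <= T)%nat -> essentially_cyclic N I T ->
     linear_rates N n f grad G gamma mu x z T
       (delta * (1 - Delta) /
        (INR N * (1 + INR T * (1 - delta)) ^ 2 * (1 - delta)))) /\
  (shuffled_cyclic N I ->
     linear_rates N n f grad G gamma mu x z N
       (delta * (1 - Delta) / (INR N * (2 - delta) ^ 2 * (1 - delta)))).
Proof.
  intros delta Delta.
  pose proof INR_N_pos as HNp.
  assert (Hdi : forall i, (i < N)%nat -> delta <= gamma i * mu i / INR N) by (intros i Hi; apply (bmin_le (N-1) (fun i => gamma i * mu i / INR N) i); lia).
  assert (Hd0 : 0 < delta).
  { apply (bmin_pos (N-1) (fun i => gamma i * mu i / INR N)). intros i Hi. cbv beta. destruct (Hgamma i ltac:(lia)). destruct (Hmu i ltac:(lia)).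
    apply Rdiv_lt_0_compat; auto. apply Rmult_lt_0_compat; auto. }
  assert (HDi : forall i, (i < N)%nat -> gamma i * L i / INR N <= Delta) by (intros i Hi; apply (bmax_ge (N-1) (fun i => gamma i * L i / INR N) i); lia).
  assert (HD1 : Delta < 1).
  { apply (bmax_lt (N-1) (fun i => gamma i * L i / INR N)). intros i Hi. cbv beta. destruct (Hgamma i ltac:(lia)).
    apply Rmult_lt_reg_r with (INR N); auto. unfold Rdiv. rewrite Rmult_assoc, Rinv_l by lra. lra. }
  destruct (classic (exists i0, (i0 < N)%nat /\ (1 <= n i0)%nat)) as [[i0 [Hi0 Hn0]]|Hall].
  2: { assert (Hn0 : forall i, (i < N)%nat -> n i = 0%nat).
       { intros i Hi. destruct (n i) eqn:E; auto. elim Hall. exists i. split; auto. lia. }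
       split; [intros; apply (rates_trivial I); auto| intros; apply (rates_trivial I); auto]. }
  assert (HdD : delta <= Delta).
  { pose proof (Hdi i0 Hi0). pose proof (HDi i0 Hi0). pose proof (mu_le_L i0 Hi0 Hn0).
    destruct (Hgamma i0 Hi0). assert (gamma i0 * mu i0 / INR N <= gamma i0 * L i0 / INR N).
    { unfold Rdiv. apply Rmult_le_compat_r; [left; apply Rinv_0_lt_compat; auto| nra]. } lra. }
  assert (Hd1 : delta < 1) by lra.
  set (rho := 1 - delta). assert (Hrho : 0 < rho) by (unfold rho; lra).
  assert (HN1 : 1 <= INR N) by (apply (le_INR 1); lia).
  assert (Hcle : forall Kt, 1 <= Kt -> 0 <= 1 - delta * (1 - Delta) / (Kt * (1 - delta))).
  { intros Kt HKt. assert (delta * (1 - Delta) / (Kt * (1 - delta)) <= 1).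
    { apply Rmult_le_reg_r with (Kt * (1 - delta)); [nra|].
      unfold Rdiv. rewrite Rmult_assoc, Rinv_l by nra. nra. } lra. }
  split.
  - intros T HT1 Hec. apply rates_of_step with I; auto.
    { apply Hcle. assert (1 <= (1 + INR T * (1 - delta)) ^ 2).
      { assert (0 <= INR T * (1 - delta)) by (apply Rmult_le_pos; [apply pos_INR| lra]). simpl. nra. }
      unfold rho in *. nra. }
    intros xs m Hmin Hxs nu.
    set (k0 := (T * nu)%nat).
    replace (T * (nu + 1))%nat with (k0 + T)%nat by (unfold k0; lia).
    assert (HTr : 1 <= INR T) by (apply (le_INR 1); lia).
    set (th := rho * INR T). assert (Hth : 0 < th) by (unfold th; nra).
    pose proof (rate_step I x z k0 T xs m delta Delta (INR T) th Halg Hmin Hxs Hd0 Hd1 Hdi HDi HD1 Hth (pos_INR T)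
      (cov_ec I x z T k0 Halg Hec)) as Hr.
    assert (HA : 0 <= Vv (x k0) (z k0) - m) by (pose proof (Vv_ge_m _ _ xs m (proj1 (proj2 Halg) k0) Hmin Hxs); lra).
    eapply Rle_trans; [apply Hr|].
    + intros t Ht. eapply Rle_trans; [apply (Qb_ec I x z k0 Halg t)|].
      pose proof (Wsum_nonneg x k0 t). apply Rmult_le_compat; auto; [apply pos_INR| apply le_INR; lia|].
      try (unfold Wsum; apply fsum_mono_len; [lia| intros; apply Qn_nonneg]).
    + apply c_mono; [lra| exact HD1| | | exact HA].
      * apply Rmult_lt_0_compat; auto. assert (0 <= (1 + / th) * (1 - delta) ^ 2 * INR T).
        { apply Rmult_le_pos; [apply Rmult_le_pos; [assert (0 < / th) by (apply Rinv_0_lt_compat; auto); lra| apply pow2_ge_0]| lra]. } lra.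
      * apply Rmult_le_compat_l; [lra|]. fold rho. unfold th.
        replace ((1 + rho * INR T) + (1 + / (rho * INR T)) * rho ^ 2 * INR T) with (1 + rho * INR T + rho * rho * INR T + rho) by (field; nra).
        replace ((1 + INR T * rho) ^ 2) with (1 + 2 * rho * INR T + rho * rho * INR T * INR T) by ring.
        assert (rho <= rho * INR T) by nra. assert (rho * rho * INR T <= rho * rho * INR T * INR T) by (assert (0 <= rho * rho * INR T) by (apply Rmult_le_pos; nra); nra).
        lra.
  - intros Hsh. apply rates_of_step with I; auto.
    { apply Hcle. assert (1 <= (2 - delta) ^ 2) by (simpl; nra). unfold rho in *. nra. }
    intros xs m Hmin Hxs nu.
    set (k0 := (N * nu)%nat).
    replace (N * (nu + 1))%nat with (k0 + N)%nat by (unfold k0; lia).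
    pose proof (rate_step I x z k0 N xs m delta Delta 1 rho Halg Hmin Hxs Hd0 Hd1 Hdi HDi HD1 Hrho ltac:(lra)
      (cov_sh I x z nu Halg Hsh)) as Hr.
    assert (HA : 0 <= Vv (x k0) (z k0) - m) by (pose proof (Vv_ge_m _ _ xs m (proj1 (proj2 Halg) k0) Hmin Hxs); lra).
    eapply Rle_trans; [apply Hr|].
    + intros t Ht. eapply Rle_trans; [apply (Qb_sh I x z nu Halg Hsh t); lia|].
      pose proof (Wsum_nonneg x k0 t). rewrite Rmult_1_l.
      unfold Wsum. apply fsum_mono_len; [lia| intros; apply Qn_nonneg].
    + apply c_mono; [lra| exact HD1| | | exact HA].
      * apply Rmult_lt_0_compat; auto. assert (0 <= (1 + / rho) * (1 - delta) ^ 2 * 1).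
        { apply Rmult_le_pos; [apply Rmult_le_pos; [assert (0 < / rho) by (apply Rinv_0_lt_compat; auto); lra| apply pow2_ge_0]| lra]. } lra.
      * apply Rmult_le_compat_l; [lra|]. fold rho.
        replace (2 - delta) with (1 + rho) by (unfold rho; ring).
        right. field. lra.
Qed.

End Main.

Theorem theorem2p9
  (N : nat) (n : nat -> nat)
  (f : nat -> vec -> R) (grad : nat -> vec -> vec) (L mu : nat -> R)
  (G : bvec -> ER) (gamma : nat -> R)
  (HN : (1 <= N)%nat)
  (Hf_on : forall i, (i < N)%nat -> fun_on (n i) (f i))
  (Hgrad : forall i, (i < N)%nat -> has_gradient (n i) (f i) (grad i))
  (HL : forall i, (i < N)%nat -> 0 <= L i /\ lipschitz_grad (n i) (grad i) (L i))
  (Hmu : forall i, (i < N)%nat -> 0 < mu i /\ strongly_convex (n i) (f i) (mu i))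
  (HG_on : bfun_on N n G) (HGp : proper G) (HGlsc : lsc N n G) (HGcvx : convexG G)
  (Hargmin : exists xs, is_minimizer N f G xs)
  (Hgamma : forall i, (i < N)%nat -> 0 < gamma i /\ gamma i * L i < INR N)
  (I : nat -> nat -> bool) (x z : nat -> bvec)
  (Halg : algorithm_BC N n grad G gamma I x z) :
  let delta := bmin (N - 1) (fun i => gamma i * mu i / INR N) in
  let Delta := bmax (N - 1) (fun i => gamma i * L i / INR N) in
  (forall T : nat, (1 <= T)%nat -> essentially_cyclic N I T ->
     linear_rates N n f grad G gamma mu x z T
       (delta * (1 - Delta) /
        (INR N * (1 + INR T * (1 - delta)) ^ 2 * (1 - delta)))) /\
  (shuffled_cyclic N I ->
     linear_rates N n f grad G gamma mu x z N
       (delta * (1 - Delta) / (INR N * (2 - delta) ^ 2 * (1 - delta)))).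
Proof.
  eapply main_sec; eauto.
Qed.
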